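(* Suppose Assumptions A1–A4 hold and $(\beta_t)$ is a positive sequence with $\lim_{t\to\infty}\beta_t=\infty$. Let $\bm{X}_t=\{\bm{x}_1,\dots,\bm{x}_t\}$ be the BOKE iterates, with bandwidth $\ell_t$ used at iteration $t$. Then: (i) If $\ell_t\equiv\ell$ is fixed, then $\inf_t h_{\mathcal{X},\bm{X}_t}\le R_\Psi\ell$ almost surely. (ii) There exists a bandwidth sequence $\ell_t\to0$ such that $\inf_t h_{\mathcal{X},\bm{X}_t}=0$ almost surely.
   Context: Standing setup. A1: $\mathcal{X}\subset\mathbb{R}^d$ is compact, convex, with nonempty interior. A2: $f:\mathcal{X}\to\mathbb{R}$ is continuous. A3: the kernel is $k(\bm{x},\bm{x}')=\Psi((\bm{x}-\bm{x}')/\ell)$ with bandwidth $\ell>0$, where $\Psi:\mathbb{R}^d\to[0,\infty)$ has support contained in $B(\bm{0},R_\Psi)$, is continuous at $\bm{0}$, $\Psi(\bm{0})>0$, $\sup\Psi\le M_\Psi$. A4: noises $\varepsilon_t$ independent, zero mean, sub-Gaussian with parameter $\varsigma>0$. For dataset $\bm{D}_t=\{(\bm{x}_i,y_i)\}_{i=1}^t$: $W_t(\bm{x})=\sum_i k(\bm{x},\bm{x}_i)$; $m_t(\bm{x})=\sum_ik(\bm{x},\bm{x}_i)y_i/W_t(\bm{x})$ if $W_t(\bm{x})>0$, else the average of $y_i$ over nearest points $\bm{x}_i$ to $\bm{x}$; $\hat\sigma_t=W_t^{-1/2}$ (with $c/0=\infty$). BOKE: starting from an initial dataset $\bm{D}_{T_0}$,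 for $t\ge T_0$ choose $\bm{x}_{t+1}\in\arg\max_{\bm{x}\in\mathcal{X}}\big(m_t(\bm{x})+\beta_t\hat\sigma_t(\bm{x})\big)$ (kernel quantities computed with bandwidth $\ell_t$), observe $y_{t+1}=f(\bm{x}_{t+1})+\varepsilon_{t+1}$ and add it to the dataset. The fill distance is $h_{\mathcal{X},\bm{X}_t}=\sup_{\bm{x}\in\mathcal{X}}\min_{i\le t}\|\bm{x}-\bm{x}_i\|$. *)

(* Defs.v *)
From HB Require Import structures.
From mathcomp Require Import all_boot all_order all_algebra.
From mathcomp Require Import all_classical all_reals all_analysis.
Set Implicit Arguments. Unset Strict Implicit. Unset Printing Implicit Defensive.
Import Order.TTheory GRing.Theory Num.Theory.
Import numFieldNormedType.Exports.
Local Open Scope classical_set_scope.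
Local Open Scope ring_scope.

Section BOKE.
Variables (R : realType) (d : nat).
Notation V := 'rV[R]_d.

Definition enorm (x : V) : R := Num.sqrt (\sum_(i < d) x ord0 i ^+ 2).

Definition convex_in (X : set V) : Prop :=
  forall x y (lam : R), X x -> X y -> 0 <= lam -> lam <= 1 ->
    X (lam *: x + (1 - lam) *: y).

Definition kern (Psi : V -> R) (l : R) (x x' : V) : R := Psi (l^-1 *: (x - x')).

(* dataset D_t = {(xs i, ys i) : i < t} (0-based indices) *)
Definition Wt (Psi : V -> R) (l : R) (xs : nat -> V) (t : nat) (x : V) : R :=
  \sum_(i < t) kern Psi l x (xs i).

Definition mindist (xs : nat -> V) (t : nat) (x : V) : R :=
  inf [set enorm (x - xs i) | i in [set i | (i < t)%N]].

Definition nearest_idx (xs : nat -> V) (t : nat) (x : V) : pred 'I_t :=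
  [pred i : 'I_t | enorm (x - xs i) == mindist xs t x].

Definition mt (Psi : V -> R) (l : R) (xs : nat -> V) (ys : nat -> R)
    (t : nat) (x : V) : R :=
  if 0 < Wt Psi l xs t x then
    (\sum_(i < t) kern Psi l x (xs i) * ys i) / Wt Psi l xs t x
  else (\sum_(i < t | (@nearest_idx xs t x) i) ys i) / #|(@nearest_idx xs t x)|%:R.

(* acquisition m_t + beta * sigma_t, sigma_t = W_t^{-1/2} (= +oo if W_t = 0) *)
Definition acq (Psi : V -> R) (l beta : R) (xs : nat -> V) (ys : nat -> R)
    (t : nat) (x : V) : \bar R :=
  if 0 < Wt Psi l xs t x then
    (mt Psi l xs ys t x + beta / Num.sqrt (Wt Psi l xs t x))%:E
  else +oo%E.

(* BOKE iterates: xs 0 .. xs (T0-1) is the initial design; for t >= T0 the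
   point xs t (the (t+1)-th point) maximises the acquisition built from the
   first t points with bandwidth ell t and parameter beta t. *)
Definition is_BOKE (X : set V) (Psi : V -> R) (T0 : nat) (beta ell : nat -> R)
    (xs : nat -> V) (ys : nat -> R) : Prop :=
  (forall i, (i < T0)%N -> X (xs i)) /\
  forall t, (T0 <= t)%N -> X (xs t) /\
    forall x, X x -> (acq Psi (ell t) (beta t) xs ys t x <=
                     acq Psi (ell t) (beta t) xs ys t (xs t))%E.

Definition fill_dist (X : set V) (xs : nat -> V) (t : nat) : R :=
  sup [set mindist xs t x | x in X].

Definition inf_fill (X : set V) (xs : nat -> V) : R :=
  inf [set fill_dist X xs t | t in [set t | (0 < t)%N]].

End BOKE.

Section Noise.
Local Open Scope ereal_scope.
Context {dm : measure_display} {T : measurableType dm} {R : realType}.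

Definition mutually_independent (P : probability T R) (eps : nat -> T -> R) :=
  (forall i, measurable_fun setT (eps i)) /\
  forall (s : seq nat), uniq s -> forall B : nat -> set R,
    (forall i, measurable (B i)) ->
    P (\bigcap_(i in [set` s]) (eps i @^-1` B i)) =
    (\prod_(i <- s) fine (P (eps i @^-1` B i)))%R%:E.

Definition zero_mean (P : probability T R) (e : T -> R) :=
  P.-integrable setT (EFin \o e) /\ \int[P]_w (e w)%:E = 0.

Definition sub_gaussian (P : probability T R) (vs : R) (e : T -> R) :=
  forall lam : R, \int[P]_w (expR (lam * e w))%:E <=
                  (expR (lam ^+ 2 * vs ^+ 2 / 2))%:E.
End Noise.

(* Main.v *)
Require Import Defs.
From HB Require Import structures.
From mathcomp Require Import all_boot all_order all_algebra.
From mathcomp Require Import all_classical all_reals all_analysis.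
From mathcomp Require Import lra finmap zify.
Import Order.TTheory GRing.Theory Num.Theory.
Import numFieldNormedType.Exports.
Local Open Scope classical_set_scope.
Local Open Scope ring_scope.

Local Open Scope nat_scope.
Fixpoint blk (T0 : nat) (mk : nat -> nat) k :=
  match k with 0 => T0 | k'.+1 => (blk T0 mk k' + (mk k').+1)%N end.

Definition Kof T0 mk t := find (fun k => t < blk T0 mk k.+1) (iota 0 t.+1).

Section Blk.
Variables (T0 : nat) (mk : nat -> nat).
Local Notation s := (blk T0 mk).
Local Notation K := (Kof T0 mk).

Lemma blk_lt k : s k < s k.+1.
Proof. by rewrite /= -addSnnS leq_addr. Qed.

Lemma blk_mono a b : a <= b -> s a <= s b.
Proof.
move=> /subnKC <-; elim: (b - a) => [|n IH]; first by rewrite addn0.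
by rewrite addnS (leq_trans IH) // ltnW // blk_lt.
Qed.

Lemma blk_ge k : k <= s k.
Proof. elim: k => [//|k IH] /=; lia. Qed.

Lemma K_hi t : t < s (K t).+1.
Proof.
have hh : has (fun k => t < s k.+1) (iota 0 t.+1).
  apply/hasP; exists t; first by rewrite mem_iota add0n ltnSn.
  by apply: leq_trans (blk_ge _); rewrite ltnS.
have fs : K t < t.+1 by move: hh; rewrite has_find size_iota.
by have := nth_find 0 hh; rewrite nth_iota ?add0n.
Qed.

Lemma K_lo t k : k < K t -> s k.+1 <= t.
Proof.
move=> kK; have := before_find 0 kK; rewrite nth_iota ?add0n => [/negbT|].
  by rewrite -leqNgt.
apply: leq_trans kK _; have := find_size (fun k => t < s k.+1) (iota 0 t.+1).
by rewrite size_iota.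
Qed.

Lemma K_ge t k : s k <= t -> k <= K t.
Proof.
move=> kt; rewrite leqNgt; apply/negP => Kk.
have := K_hi t; have := blk_mono _ _ Kk; lia.
Qed.

Lemma K_eq t k : s k <= t < s k.+1 -> K t = k.
Proof.
move=> /andP [lo hi]; apply/eqP; rewrite eqn_leq K_ge // andbT leqNgt.
by apply/negP => /K_lo; rewrite leqNgt hi.
Qed.
End Blk.
Local Open Scope ring_scope.

Section Aux.
Variables (R : realType) (d : nat).
Notation V := 'rV[R]_d.

Lemma psi_pos (Psi : V -> R) :
  {for 0, continuous Psi} -> 0 < Psi 0 ->
  exists2 rho : R, 0 < rho & forall z, `|z| < rho -> 0 < Psi z.
Proof.
move=> cP P0.
move: cP => /cvgrPdist_lt /(_ _ (divr_gt0 P0 (ltr0n R 2))).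
move=> /nbhs_norm0P [rho rho0 H]; exists rho => // z /H /=.
move=> h; have : Psi 0 - Psi z < Psi 0 / 2 by apply: le_lt_trans h; exact: ler_norm.
move=> h2. lra.
Qed.

Lemma enorm_ge0 (v : V) : 0 <= enorm v.
Proof. exact: sqrtr_ge0. Qed.

Lemma enormZ (a : R) (v : V) : enorm (a *: v) = `|a| * enorm v.
Proof.
rewrite /enorm.
have -> : \sum_(i < d) (a *: v) ord0 i ^+ 2 = a ^+ 2 * \sum_(i < d) v ord0 i ^+ 2.
  by rewrite mulr_sumr; apply: eq_bigr => i _; rewrite mxE exprMn.
rewrite sqrtrM ?sqrtr_sqr // sqr_ge0 //.
Qed.

Lemma mindist_ge0 (xs : nat -> V) t x : (0 < t)%N -> 0 <= mindist xs t x.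
Proof.
move=> t0; apply: lb_le_inf.
  by exists (enorm (x - xs 0%N)), 0%N.
by move=> _ [i _ <-]; exact: enorm_ge0.
Qed.

Lemma mindist_le (xs : nat -> V) t x i : (i < t)%N -> mindist xs t x <= enorm (x - xs i).
Proof.
move=> it; apply: ge_inf; last by exists i.
by exists 0 => _ [j _ <-]; exact: enorm_ge0.
Qed.

Lemma fill_ge0 (X : set V) (xs : nat -> V) t x0 : (0 < t)%N -> X x0 -> 0 <= fill_dist X xs t.
Proof.
move=> t0 Xx0; rewrite /fill_dist.
case: (pselect (has_ubound [set mindist xs t x | x in X])) => hub.
  apply: le_trans (mindist_ge0 xs t x0 t0) _.
  by apply: ub_le_sup => //; exists x0.
by rewrite sup_out // => -[].
Qed.

Lemma inf_fill_le (X : set V) (xs : nat -> V) t x0 : (0 < t)%N -> X x0 -> inf_fill X xs <= fill_dist X xs t.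
Proof.
move=> t0 Xx0; apply: ge_inf; last by exists t.
exists 0 => _ [t' /= t'0 <-]; exact: (fill_ge0 X xs t' x0 t'0 Xx0).
Qed.

Lemma inf_fill_ge0 (X : set V) (xs : nat -> V) x0 : X x0 -> 0 <= inf_fill X xs.
Proof.
move=> Xx0; apply: lb_le_inf; first by exists (fill_dist X xs 1), 1%N.
move=> _ [t' /= t'0 <-]; exact: (fill_ge0 X xs t' x0 t'0 Xx0).
Qed.


Lemma packing (X : set V) (delta : R) : compact X -> 0 < delta ->
  exists m : nat, forall y : nat -> V, (forall i, (i <= m)%N -> X (y i)) ->
    exists i j, (i < j <= m)%N /\ `|y j - y i| < delta.
Proof.
move=> cX d0; move: cX; rewrite compact_cover => cX.
have [D' _ cov] := cX V X (fun p => ball p (delta / 2)) (fun i _ => ball_open i _)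
  (fun x Xx => ex_intro2 _ (fun i => ball i (delta / 2) x) x Xx (ballxx x (divr_gt0 d0 (ltr0n R 2)))).
pose s := enum_fset D'.
exists (size s) => y Xy.
have hy : forall i : 'I_(size s).+1, exists p, p \in s /\ ball p (delta / 2) (y i).
  move=> i; have [p Dp bp] := cov _ (Xy i (ltn_ord i)).
  by exists p; split.
pose pk i := sval (cid (hy i)).
have pkP i : pk i \in s /\ ball (pk i) (delta / 2) (y i) := svalP (cid (hy i)).
have idx i : (index (pk i) s < size s)%N by rewrite index_mem; exact: (proj1 (pkP i)).
pose G (i : 'I_(size s).+1) : 'I_(size s) := Ordinal (idx i).
suff [a [b [ab Gab]]] : exists a b : 'I_(size s).+1, (a < b)%N /\ G a = G b.
  exists a, b; split; first by rewrite ab -ltnS ltn_ord.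
  have epk : pk a = pk b.
    have /(congr1 val) /= hi := Gab.
    by rewrite -(nth_index 0 (proj1 (pkP a))) hi (nth_index 0 (proj1 (pkP b))).
  have ba : ball (y a) (delta / 2 + delta / 2) (y b).
    apply: (@ball_triangle _ _ (pk a)); first exact: ball_sym (proj2 (pkP a)).
    rewrite epk; exact: (proj2 (pkP b)).
  move: ba; rewrite -ball_normE /= distrC.
  by have -> : delta / 2 + delta / 2 = delta by lra.
apply: contrapT => Hn.
have inj : injective G.
  move=> a b Gab; case: (ltngtP a b) => [ab|ba|/val_inj//]; exfalso; apply: Hn.
    by exists a, b.
  by exists b, a.
by have := leq_card G inj; rewrite !card_ord ltnn.
Qed.

Lemma W_far (Psi : V -> R) (rho c : R) (xs : nat -> V) t x :
  0 < c -> (forall z, 0 <= Psi z) -> (forall z, `|z| < rho -> 0 < Psi z) ->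
  ~ (0 < Wt Psi c xs t x) -> forall i, (i < t)%N -> rho * c <= `|x - xs i|.
Proof.
move=> c0 Pge0 Prho nW i it; rewrite leNgt; apply/negP => hlt; apply: nW.
have kp : 0 < kern Psi c x (xs i).
  apply: Prho; rewrite normrZ gtr0_norm ?invr_gt0 //.
  by rewrite ltr_pdivrMl // mulrC.
rewrite /Wt (bigD1 (Ordinal it)) //=.
by apply: lt_le_trans kp _; rewrite lerDl; apply: sumr_ge0 => j _; exact: Pge0.
Qed.

Lemma fill_le (X : set V) (Psi : V -> R) (RPsi c : R) (xs : nat -> V) t x0 :
  0 < c -> (0 < t)%N -> X x0 -> (forall z, Psi z != 0 -> enorm z < RPsi) ->
  (forall x, X x -> 0 < Wt Psi c xs t x) -> fill_dist X xs t <= RPsi * c.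
Proof.
move=> c0 t0 Xx0 supp Wp; apply: ge_sup; first by exists (mindist xs t x0), x0.
move=> _ [x Xx <-].
case: (pselect (exists i : 'I_t, kern Psi c x (xs i) != 0)) => [[i Hi]|Hn].
  apply: le_trans (mindist_le xs t x i (ltn_ord i)) _.
  have := supp _ Hi; rewrite enormZ gtr0_norm ?invr_gt0 //.
  by rewrite ltr_pdivrMl // mulrC => /ltW.
exfalso; have := Wp _ Xx; rewrite /Wt big1 ?ltxx // => i _.
by apply/eqP; apply: contrapT => Hi; apply: Hn; exists i; apply/negP.
Qed.

Lemma window (X : set V) (Psi : V -> R) (RPsi rho c : R) (T0 t0 m : nat)
    (beta ell : nat -> R) (xs : nat -> V) (ys : nat -> R) x0 :
  0 < c -> (forall z, 0 <= Psi z) -> (forall z, Psi z != 0 -> enorm z < RPsi) ->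
  (forall z, `|z| < rho -> 0 < Psi z) -> X x0 -> (0 < T0)%N -> (T0 <= t0)%N ->
  is_BOKE X Psi T0 beta ell xs ys ->
  (forall y : nat -> V, (forall i, (i <= m)%N -> X (y i)) ->
    exists i j, (i < j <= m)%N /\ `|y j - y i| < rho * c) ->
  (forall t, (t0 <= t <= t0 + m)%N -> ell t = c) ->
  exists t, (0 < t)%N /\ fill_dist X xs t <= RPsi * c.
Proof.
move=> c0 Pge0 supp Prho Xx0 T00 Tt0 [_ B] Pk Hell.
apply: contrapT => Hn.
have far : forall t, (t0 <= t <= t0 + m)%N -> forall i, (i < t)%N ->
    rho * c <= `|xs t - xs i|.
  move=> t /andP [t0t tm]; have Tt : (T0 <= t)%N := leq_trans Tt0 t0t.
  have t0' : (0 < t)%N := leq_trans T00 Tt.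
  have [x [Xx nWx]] : exists x, X x /\ ~ (0 < Wt Psi c xs t x).
    apply: contrapT => H; apply: Hn; exists t; split => //.
    apply: (fill_le X Psi RPsi c xs t x0 c0 t0' Xx0 supp) => x Xx.
    by apply: contrapT => nW; apply: H; exists x.
  apply: (W_far Psi rho c xs t (xs t) c0 Pge0 Prho) => hW.
  have [_ Ht] := B t Tt; have := Ht x Xx; rewrite (Hell t) ?t0t ?tm //.
  rewrite /acq (negbTE (introN idP nWx)) leye_eq.
  by rewrite hW.
have Xy : forall i, (i <= m)%N -> X (xs (t0 + i)%N).
  by move=> i _; have [] := B (t0 + i)%N (leq_trans Tt0 (leq_addr _ _)).
have [i [j [/andP [ij jm] hl]]] := Pk _ Xy.
have := far (t0 + j)%N; rewrite leq_addr leq_add2l jm => /(_ isT (t0 + i)%N).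
by rewrite ltn_add2l ij => /(_ isT); rewrite leNgt hl.
Qed.
End Aux.

Theorem mainTheorem4 (R : realType) (d : nat)
    (X : set 'rV[R]_d) (f : 'rV[R]_d -> R)
    (Psi : 'rV[R]_d -> R) (RPsi MPsi : R)
    (dm : measure_display) (T : measurableType dm) (P : probability T R)
    (eps : nat -> T -> R) (vs : R) (beta : nat -> R) (T0 : nat) :
  (* A1 *)
  compact X -> convex_in X -> interior X !=set0 ->
  (* A2 *)
  {within X, continuous f} ->
  (* A3 *)
  (forall z, 0 <= Psi z) -> (forall z, Psi z != 0 -> enorm z < RPsi) ->
  {for 0, continuous Psi} -> 0 < Psi 0 -> (forall z, Psi z <= MPsi) ->
  (* A4 *)
  0 < vs -> mutually_independent P eps ->
  (forall i, zero_mean P (eps i)) -> (forall i, sub_gaussian P vs (eps i)) ->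
  (* beta_t *)
  (forall t, 0 < beta t) -> beta @ \oo --> +oo ->
  (* nonempty initial design *)
  (0 < T0)%N ->
  (* (i) fixed bandwidth *)
  (forall ell : R, 0 < ell ->
    forall x : nat -> T -> 'rV[R]_d,
      (forall w, is_BOKE X Psi T0 beta (fun=> ell) (fun i => x i w)
                   (fun i => f (x i w) + eps i w)) ->
      \forall w \ae P, inf_fill X (fun i => x i w) <= RPsi * ell)
  /\
  (* (ii) vanishing bandwidth *)
  (exists ell : nat -> R, (forall t, 0 < ell t) /\ ell @ \oo --> 0 /\
    forall x : nat -> T -> 'rV[R]_d,
      (forall w, is_BOKE X Psi T0 beta ell (fun i => x i w)
                   (fun i => f (x i w) + eps i w)) ->
      \forall w \ae P, inf_fill X (fun i => x i w) = 0).
Proof.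
move=> cX _ [x0 /interior_subset Xx0] _ Pge0 supp cP P0 _ _ _ _ _ _ _ T00.
have [rho rho0 Prho] := psi_pos _ _ _ cP P0.
split.
  move=> ell ell0 x Hx; apply: aeW => w.
  have [m Pk] := packing _ _ X _ cX (mulr_gt0 rho0 ell0).
  have [t [t0 ht]] := window _ _ _ _ _ _ _ _ T0 m _ _ _ _ _ ell0 Pge0 supp Prho
    Xx0 T00 (leqnn _) (Hx w) Pk (fun _ _ => erefl).
  exact: le_trans (inf_fill_le _ _ _ _ _ _ t0 Xx0) ht.
pose c (k : nat) : R := (k.+1%:R)^-1.
have c0 k : 0 < c k by rewrite invr_gt0 ltr0n.
have Hm k := packing _ _ X _ cX (mulr_gt0 rho0 (c0 k)).
pose mk k := sval (cid (Hm k)).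
have mkP k := svalP (cid (Hm k)).
exists (fun t => c (Kof T0 mk t)); split; first by move=> t; exact: c0.
split.
  apply/cvgr0Pnorm_lt => e e0.
  have hk : e^-1 < (Num.bound (e^-1))%:R.
    by apply: archi_boundP; rewrite ltW // invr_gt0.
  apply: filterS (nbhs_infty_ge (blk T0 mk (Num.bound (e^-1)))) => t kt.
  have Kk := K_ge _ _ _ _ kt.
  rewrite ger0_norm ?ltW ?c0 // /c invf_plt ?posrE ?ltr0n //.
  apply: lt_le_trans hk _; rewrite ler_nat; exact: leqW.
move=> x Hx; apply: aeW => w.
have ge0 := inf_fill_ge0 _ _ X (fun i => x i w) x0 Xx0.
have le k : inf_fill X (fun i => x i w) <= RPsi * c k.
  have Hell : forall t, (blk T0 mk k <= t <= blk T0 mk k + mk k)%N ->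
      c (Kof T0 mk t) = c k.
    move=> t /andP [lo hi]; rewrite (K_eq T0 mk t k) //.
    by rewrite lo /= addnS ltnS.
  have [t [t0 ht]] := window _ _ _ _ _ _ _ _ (blk T0 mk k) (mk k) _ _ _ _ _ (c0 k)
    Pge0 supp Prho Xx0 T00 (blk_mono T0 mk 0 k (leq0n k)) (Hx w) (mkP k) Hell.
  exact: le_trans (inf_fill_le _ _ _ _ _ _ t0 Xx0) ht.
apply/eqP; rewrite eq_le ge0 andbT leNgt; apply/negP => pos.
set I := inf_fill _ _ in pos le ge0 *.
have hk : `|RPsi| / I < (Num.bound (`|RPsi| / I))%:R.
  by apply: archi_boundP; rewrite divr_ge0 // ltW.
have := le (Num.bound (`|RPsi| / I)); rewrite leNgt => /negP; apply.
apply: le_lt_trans (_ : `|RPsi| * c _ < I).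
  by apply: ler_wpM2r; [exact: ltW (c0 _) | exact: ler_norm].
move: hk; rewrite ltr_pdivrMr // /c => hk.
rewrite -[X in X < _]/(`|RPsi| / _) ltr_pdivrMr ?ltr0n //.
apply: lt_le_trans hk _; rewrite mulrC; apply: ler_wpM2l; first exact: ltW.
by rewrite ler_nat.
Qed.
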